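(* Let $0<q<1/2$, $p=1-q$, $\lambda=q/p$. For each integer $z\ge2$ let $\kappa(z)$ be the unique $\kappa\in(0,+\infty)$ satisfying $$\sum_{j=1}^{z-1}\left(\prod_{i=1}^{j}\left(1-\frac iz\right)\right)\frac{1}{\kappa^j}=\frac{\lambda}{1-\lambda}.$$ Then as $z\to+\infty$, $$\kappa(z)=\frac pq-\frac{p^2}{q(p-q)}\,\frac1z+o(z^{-1}).$$
   Context: The left-hand side is strictly decreasing in $\kappa$ from $+\infty$ to $0$, so $\kappa(z)$ is well defined. *)

(* Defs.v *)
From Stdlib Require Import Reals.
Open Scope R_scope.

Fixpoint kprod (z j : nat) : R :=
  match j with
  | O => 1
  | S j' => kprod z j' * (1 - INR (S j') / INR z)
  end.

Fixpoint ksum (z : nat) (k : R) (n : nat) : R :=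
  match n with
  | O => 0
  | S n' => ksum z k n' + kprod z (S n') / k ^ (S n')
  end.

Definition kappa_lhs (z : nat) (k : R) : R := ksum z k (z - 1).

(* Main.v *)
Require Import Defs.
From Stdlib Require Import Reals.
From Stdlib Require Import Lra Lia Psatz.
Open Scope R_scope.

Fixpoint ssum (f : nat -> R) (n : nat) : R :=
  match n with O => 0 | S m => ssum f m + f (S m) end.

Lemma ssum_le (f g : nat -> R) n :
  (forall j, (1 <= j <= n)%nat -> f j <= g j) -> ssum f n <= ssum g n.
Proof.
  induction n as [|n IH]; simpl; intros H; [lra|].
  assert (H1 := H (S n) ltac:(lia)).
  assert (ssum f n <= ssum g n) by (apply IH; intros; apply H; lia). lra.
Qed.

Lemma ssum_ext (f g : nat -> R) n :
  (forall j, (1 <= j <= n)%nat -> f j = g j) -> ssum f n = ssum g n.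
Proof.
  induction n as [|n IH]; simpl; intros H; [lra|].
  rewrite (H (S n) ltac:(lia)), IH; [reflexivity|]. intros; apply H; lia.
Qed.

Lemma ssum_plus (f g : nat -> R) n :
  ssum (fun j => f j + g j) n = ssum f n + ssum g n.
Proof. induction n; simpl; [lra|]. rewrite IHn; lra. Qed.

Lemma ssum_scal (c : R) (f : nat -> R) n :
  ssum (fun j => c * f j) n = c * ssum f n.
Proof. induction n; simpl; [lra|]. rewrite IHn; lra. Qed.

Lemma ssum_nonneg (f : nat -> R) n :
  (forall j, (1 <= j <= n)%nat -> 0 <= f j) -> 0 <= ssum f n.
Proof.
  intros H. apply Rle_trans with (ssum (fun _ => 0) n).
  - clear H; induction n; simpl; lra.
  - apply ssum_le; auto.
Qed.

Lemma ksum_ssum z k n : k <> 0 ->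
  ksum z k n = ssum (fun j => kprod z j * (/ k) ^ j) n.
Proof.
  intros Hk. induction n; [simpl; lra|]. cbn [ksum ssum]. rewrite IHn.
  unfold Rdiv. rewrite pow_inv. reflexivity.
Qed.

Lemma geom_sum x n : x <> 1 ->
  ssum (fun j => x ^ j) n = (x - x ^ (S n)) / (1 - x).
Proof.
  intros Hx. assert (1 - x <> 0) by lra.
  induction n; simpl; [field; auto|].
  rewrite IHn. simpl. field; auto.
Qed.

Definition Qp (n : nat) (x : R) : R :=
  INR n * INR (S n) / 2 * (1 - x) ^ 2 + INR (S n) - INR n * x.

Lemma tri_sum x n : x <> 1 ->
  ssum (fun j => INR j * INR (S j) / 2 * x ^ j) n
  = (x - x ^ (S n) * Qp n x) / (1 - x) ^ 3.
Proof.
  intros Hx. assert (1 - x <> 0) by lra.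
  induction n.
  - unfold Qp; simpl. field; auto.
  - cbn [ssum]. rewrite IHn. unfold Qp. rewrite !S_INR. simpl. field; auto.
Qed.

Lemma Qp_bounds n x : 0 <= x <= 1 -> 0 <= Qp n x <= INR (S n) ^ 2.
Proof.
  intros Hx. unfold Qp. rewrite S_INR.
  assert (0 <= INR n) by apply pos_INR.
  assert (0 <= (1 - x) ^ 2 <= 1) by (split; nra).
  split; nra.
Qed.

Lemma kprod_bounds z j : (0 < z)%nat -> (j <= z)%nat ->
  0 <= kprod z j /\ 1 - INR j * INR (S j) / (2 * INR z) <= kprod z j /\
  kprod z j <= 1 - INR j * INR (S j) / (2 * INR z) + (INR j * INR (S j) / (2 * INR z)) ^ 2 / 2.
Proof.
  intros Hz. induction j as [|j IH]; intros Hj.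
  - simpl. split; [lra|]. split; lra.
  - assert (Hzr : 0 < INR z) by (apply lt_0_INR; lia).
    assert (Hjz : INR (S j) <= INR z) by (apply le_INR; lia).
    destruct (IH ltac:(lia)) as [H0 [H1 H2]].
    set (T0 := INR j * INR (S j) / (2 * INR z)) in *.
    set (a := INR (S j) / INR z).
    assert (Ha : 0 <= a <= 1).
    { assert (a * INR z = INR (S j)) by (unfold a; field; lra).
      assert (0 <= INR (S j)) by apply pos_INR. split; nra. }
    assert (HT0 : 0 <= T0).
    { unfold T0. unfold Rdiv. apply Rmult_le_pos.
      apply Rmult_le_pos; apply pos_INR. left; apply Rinv_0_lt_compat; lra. }
    assert (HT : INR (S j) * INR (S (S j)) / (2 * INR z) = T0 + a).
    { unfold T0, a. rewrite !S_INR. field. lra. }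
    rewrite HT. change (kprod z (S j)) with (kprod z j * (1 - a)).
    split; [nra|]. split; nra.
Qed.

Lemma pow_le_1 y m : 0 <= y <= 1 -> y ^ m <= 1.
Proof. intros H. rewrite <- (pow1 m). apply pow_incr. lra. Qed.

Lemma bern y m : 0 <= y <= 1 -> y ^ m * (1 + INR m * (1 - y)) <= 1.
Proof.
  intros Hy. induction m.
  - simpl. lra.
  - rewrite S_INR. simpl.
    assert (0 <= y ^ m <= 1) by (split; [apply pow_le; lra| apply pow_le_1; lra]).
    assert (0 <= INR m) by apply pos_INR.
    assert (0 <= y * (1 - y ^ m * (1 + INR m * (1 - y)))) by (apply Rmult_le_pos; lra).
    assert (0 <= (1 - y) * (1 - y * y ^ m)) by (apply Rmult_le_pos; nra).
    nra.
Qed.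

Lemma lin_geom y m : 0 <= y < 1 -> INR m * y ^ m <= 1 / (1 - y).
Proof.
  intros Hy. assert (H := bern y m ltac:(lra)).
  assert (0 <= y ^ m) by (apply pow_le; lra).
  apply Rmult_le_reg_r with (1 - y); [lra|].
  replace (1 / (1 - y) * (1 - y)) with 1 by (field; lra). nra.
Qed.

Definition M4 (b : R) := (1 / (1 - sqrt (sqrt b))) ^ 4.

Lemma sqrt_lt1 x : 0 <= x < 1 -> 0 <= sqrt x < 1.
Proof.
  intros H. split; [apply sqrt_pos|].
  rewrite <- sqrt_1. apply sqrt_lt_1_alt. lra.
Qed.

Lemma pow4_bound x b m : 0 <= x <= b -> b < 1 -> INR m ^ 4 * x ^ m <= M4 b.
Proof.
  intros Hx Hb.
  set (r := sqrt (sqrt x)). set (rb := sqrt (sqrt b)).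
  assert (Hs : 0 <= sqrt x < 1) by (apply sqrt_lt1; lra).
  assert (Hr : 0 <= r < 1) by (apply sqrt_lt1; lra).
  assert (Hsb : 0 <= sqrt b < 1) by (apply sqrt_lt1; lra).
  assert (Hrb : 0 <= rb < 1) by (apply sqrt_lt1; lra).
  assert (Hrrb : r <= rb) by (apply sqrt_le_1_alt, sqrt_le_1_alt; lra).
  assert (Hr4 : x = r ^ 4).
  { unfold r. simpl. rewrite Rmult_1_r, <- Rmult_assoc, sqrt_sqrt by apply sqrt_pos.
    rewrite sqrt_sqrt; lra. }
  rewrite Hr4, <- pow_mult, Nat.mul_comm, pow_mult, <- Rpow_mult_distr.
  unfold M4. fold rb. apply pow_incr. split.
  - apply Rmult_le_pos; [apply pos_INR|apply pow_le; lra].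
  - apply Rle_trans with (1 / (1 - r)); [apply lin_geom; lra|].
    unfold Rdiv. rewrite !Rmult_1_l. apply Rinv_le_contravar; lra.
Qed.

Definition K4 (b : R) := 4 * M4 (sqrt b) / (1 - sqrt b).

Lemma M4_pos b : 0 <= b < 1 -> 0 < M4 b.
Proof.
  intros H. unfold M4. apply pow_lt.
  assert (0 <= sqrt (sqrt b) < 1) by (apply sqrt_lt1; apply sqrt_lt1; lra).
  unfold Rdiv. rewrite Rmult_1_l. apply Rinv_0_lt_compat. lra.
Qed.

Lemma sq_sum_bound x b n : 0 <= x <= b -> b < 1 ->
  ssum (fun j => (INR j * INR (S j)) ^ 2 * x ^ j) n <= K4 b.
Proof.
  intros Hx Hb.
  set (s := sqrt x).
  assert (Hs : 0 <= s < 1) by (apply sqrt_lt1; lra).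
  assert (Hsb : 0 <= sqrt b < 1) by (apply sqrt_lt1; lra).
  assert (Hssb : s <= sqrt b) by (apply sqrt_le_1_alt; lra).
  assert (HM := M4_pos (sqrt b) Hsb).
  apply Rle_trans with (ssum (fun j => (4 * M4 (sqrt b)) * s ^ j) n).
  - apply ssum_le. intros j Hj.
    assert (Hxj : x ^ j = s ^ j * s ^ j).
    { rewrite <- Rpow_mult_distr. unfold s. rewrite sqrt_sqrt; lra. }
    rewrite Hxj.
    assert (H4 := pow4_bound s (sqrt b) j ltac:(lra) ltac:(lra)).
    assert (Hj1 : 1 <= INR j) by (apply (le_INR 1); lia).
    assert (HS : INR (S j) <= 2 * INR j) by (rewrite S_INR; lra).
    assert (Hsj : 0 <= s ^ j) by (apply pow_le; lra).
    assert (Hq : (INR j * INR (S j)) ^ 2 <= 4 * INR j ^ 4).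
    { assert (0 <= INR j * INR (S j) <= 2 * INR j ^ 2) by (rewrite S_INR in *; simpl; nra).
      apply Rle_trans with ((2 * INR j ^ 2) ^ 2); [apply pow_incr; lra|].
      right; ring. }
    nra.
  - rewrite ssum_scal, geom_sum by lra. unfold K4.
    assert (0 <= s ^ S n) by (apply pow_le; lra).
    apply Rle_trans with (4 * M4 (sqrt b) * (1 / (1 - s))).
    + apply Rmult_le_compat_l; [lra|]. unfold Rdiv.
      apply Rmult_le_compat_r; [left; apply Rinv_0_lt_compat; lra|]. lra.
    + unfold Rdiv. rewrite Rmult_1_l. apply Rmult_le_compat_l; [lra|].
      apply Rinv_le_contravar; lra.
Qed.

Definition Gs (n : nat) (x : R) := ssum (fun j => kprod (S n) j * x ^ j) n.

Lemma G_lower n x : 0 <= x < 1 ->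
  x / (1 - x) - / INR (S n) * (x / (1 - x) ^ 3) - x ^ S n / (1 - x) <= Gs n x.
Proof.
  intros Hx. set (t := / INR (S n)).
  assert (Hz : 0 < INR (S n)) by (apply lt_0_INR; lia).
  assert (Ht : 0 < t) by (apply Rinv_0_lt_compat; lra).
  apply Rle_trans with (ssum (fun j => x ^ j + (- t) * (INR j * INR (S j) / 2 * x ^ j)) n).
  - rewrite ssum_plus, ssum_scal, geom_sum, tri_sum by lra.
    assert (HQ := Qp_bounds n x ltac:(lra)).
    assert (0 <= x ^ S n) by (apply pow_le; lra).
    assert (0 < 1 - x) by lra.
    assert (0 < (1 - x) ^ 3) by (apply pow_lt; lra).
    assert (x ^ S n * Qp n x / (1 - x) ^ 3 >= 0).
    { unfold Rdiv. apply Rle_ge. apply Rmult_le_pos; [nra|left; apply Rinv_0_lt_compat; lra]. }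
    assert (E1 : (x - x ^ S n) / (1 - x) = x / (1 - x) - x ^ S n / (1 - x)) by (field; lra).
    assert (E2 : (x - x ^ S n * Qp n x) / (1 - x) ^ 3 = x / (1 - x) ^ 3 - x ^ S n * Qp n x / (1 - x) ^ 3) by (field; lra).
    rewrite E1, E2. nra.
  - unfold Gs. apply ssum_le. intros j Hj.
    destruct (kprod_bounds (S n) j ltac:(lia) ltac:(lia)) as [_ [H1 _]].
    assert (0 <= x ^ j) by (apply pow_le; lra).
    assert (INR j * INR (S j) / (2 * INR (S n)) = t * (INR j * INR (S j) / 2)) by (unfold t; field; lra).
    nra.
Qed.

Lemma G_upper n x b : 0 <= x <= b -> b < 1 ->
  Gs n x <= x / (1 - x) - / INR (S n) * (x / (1 - x) ^ 3)
     + / INR (S n) * (x ^ S n * INR (S n) ^ 2 / (1 - x) ^ 3)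
     + (/ INR (S n)) ^ 2 * (K4 b / 8).
Proof.
  intros Hx Hb. set (t := / INR (S n)).
  assert (Hz : 0 < INR (S n)) by (apply lt_0_INR; lia).
  assert (Ht : 0 < t) by (apply Rinv_0_lt_compat; lra).
  apply Rle_trans with (ssum (fun j => (x ^ j + (- t) * (INR j * INR (S j) / 2 * x ^ j))
      + (t ^ 2 / 8) * ((INR j * INR (S j)) ^ 2 * x ^ j)) n).
  - unfold Gs. apply ssum_le. intros j Hj.
    destruct (kprod_bounds (S n) j ltac:(lia) ltac:(lia)) as [_ [_ H2]].
    assert (0 <= x ^ j) by (apply pow_le; lra).
    assert (E : INR j * INR (S j) / (2 * INR (S n)) = t * (INR j * INR (S j) / 2)) by (unfold t; field; lra).
    rewrite E in H2.
    apply Rle_trans with ((1 - t * (INR j * INR (S j) / 2) + (t * (INR j * INR (S j) / 2)) ^ 2 / 2) * x ^ j).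
    + apply Rmult_le_compat_r; lra.
    + cbv beta. right; field.
  - rewrite ssum_plus, ssum_plus, !ssum_scal, geom_sum, tri_sum by lra.
    assert (HQ := Qp_bounds n x ltac:(lra)).
    assert (HK := sq_sum_bound x b n Hx Hb).
    assert (0 <= x ^ S n) by (apply pow_le; lra).
    assert (0 < 1 - x) by lra.
    assert (0 < (1 - x) ^ 3) by (apply pow_lt; lra).
    assert (E1 : (x - x ^ S n) / (1 - x) = x / (1 - x) - x ^ S n / (1 - x)) by (field; lra).
    assert (E2 : (x - x ^ S n * Qp n x) / (1 - x) ^ 3 = x / (1 - x) ^ 3 - x ^ S n * Qp n x / (1 - x) ^ 3) by (field; lra).
    assert (E3 : x ^ S n * Qp n x / (1 - x) ^ 3 <= x ^ S n * INR (S n) ^ 2 / (1 - x) ^ 3).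
    { unfold Rdiv. apply Rmult_le_compat_r; [left; apply Rinv_0_lt_compat; lra|].
      apply Rmult_le_compat_l; lra. }
    assert (E4 : 0 <= x ^ S n / (1 - x)).
    { unfold Rdiv. apply Rmult_le_pos; [lra|left; apply Rinv_0_lt_compat; lra]. }
    rewrite E1, E2.
    assert (0 <= t ^ 2) by (apply pow_le; lra).
    assert (t ^ 2 / 8 * ssum (fun j => (INR j * INR (S j)) ^ 2 * x ^ j) n <= t ^ 2 * (K4 b / 8)) by nra.
    nra.
Qed.

Definition Ec (b : R) := M4 b / (1 - b) ^ 3 + K4 b / 8.

Lemma G_err n x b : (1 <= n)%nat -> 0 <= x <= b -> b < 1 ->
  let t := / INR (S n) in
  x / (1 - x) - t * (x / (1 - x) ^ 3) - Ec b * t ^ 2 <= Gs n x /\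
  Gs n x <= x / (1 - x) - t * (x / (1 - x) ^ 3) + Ec b * t ^ 2.
Proof.
  intros Hn Hx Hb t.
  assert (HL := G_lower n x ltac:(lra)).
  assert (HU := G_upper n x b Hx Hb).
  fold t in HL, HU.
  set (Z := INR (S n)) in *.
  assert (HZ : 2 <= Z) by (unfold Z; rewrite S_INR; assert (1 <= INR n) by (apply (le_INR 1); lia); lra).
  assert (HtZ : t * Z = 1) by (unfold t; field; lra).
  assert (Ht : 0 < t) by (unfold t; apply Rinv_0_lt_compat; lra).
  assert (Ht1 : t <= 1) by nra.
  set (X := x ^ S n) in *.
  assert (HX0 : 0 <= X) by (unfold X; apply pow_le; lra).
  assert (HM := pow4_bound x b (S n) Hx Hb). fold Z X in HM.
  assert (HMp : 0 < M4 b) by (apply M4_pos; lra).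
  assert (HXt : X = (Z ^ 4 * X) * t ^ 4).
  { replace (Z ^ 4 * X * t ^ 4) with ((t * Z) ^ 4 * X) by ring. rewrite HtZ. ring. }
  assert (HXZ : t * (X * Z ^ 2 / (1 - x) ^ 3) = (Z ^ 4 * X) * t ^ 3 * / (1 - x) ^ 3).
  { replace ((Z ^ 4 * X) * t ^ 3) with ((t * Z) ^ 3 * (X * Z)) by ring. rewrite HtZ.
    replace t with (/ Z) by reflexivity. field. split; lra. }
  set (w := / (1 - b) ^ 3).
  assert (Hb0 : 0 <= b) by lra.
  assert (Hw : 0 < w) by (unfold w; apply Rinv_0_lt_compat, pow_lt; lra).
  assert (Hu : / (1 - x) <= w).
  { unfold w. apply Rinv_le_contravar; [apply pow_lt; lra|].
    assert (0 < 1 - b) by lra. assert ((1 - b) ^ 3 <= 1 - b).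
    { replace ((1 - b) ^ 3) with ((1 - b) * (1 - b) ^ 2) by ring.
      assert ((1 - b) ^ 2 <= 1) by (apply pow_le_1; lra).
      assert (0 <= (1 - b) ^ 2) by (apply pow_le; lra). nra. }
    lra. }
  assert (Hv : / (1 - x) ^ 3 <= w).
  { unfold w. apply Rinv_le_contravar; [apply pow_lt; lra|]. apply pow_incr; lra. }
  assert (Hu0 : 0 < / (1 - x)) by (apply Rinv_0_lt_compat; lra).
  assert (Hv0 : 0 < / (1 - x) ^ 3) by (apply Rinv_0_lt_compat, pow_lt; lra).
  assert (Ht42 : t ^ 4 <= t ^ 2).
  { replace (t ^ 4) with (t ^ 2 * t ^ 2) by ring.
    assert (t ^ 2 <= 1) by (apply pow_le_1; lra). assert (0 <= t^2) by (apply pow_le; lra). nra. }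
  assert (Ht32 : t ^ 3 <= t ^ 2).
  { replace (t ^ 3) with (t ^ 2 * t) by ring.
    assert (0 <= t^2) by (apply pow_le; lra). nra. }
  assert (Ht2 : 0 <= t ^ 2) by (apply pow_le; lra).
  assert (HZX : 0 <= Z ^ 4 * X) by (apply Rmult_le_pos; [apply pow_le|]; lra).
  assert (A1 : X / (1 - x) <= M4 b * w * t ^ 2).
  { unfold Rdiv. rewrite HXt.
    apply Rle_trans with (M4 b * t ^ 4 * / (1 - x)).
    - apply Rmult_le_compat_r; [lra|]. apply Rmult_le_compat_r; [apply pow_le; lra|lra].
    - apply Rle_trans with (M4 b * t ^ 2 * w); [|right; ring].
      apply Rmult_le_compat; try lra.
      + apply Rmult_le_pos; [lra|apply pow_le; lra].
      + apply Rmult_le_compat_l; lra. }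
  assert (A2 : t * (X * Z ^ 2 / (1 - x) ^ 3) <= M4 b * w * t ^ 2).
  { rewrite HXZ.
    apply Rle_trans with (M4 b * t ^ 3 * / (1 - x) ^ 3).
    - apply Rmult_le_compat_r; [lra|]. apply Rmult_le_compat_r; [apply pow_le; lra|lra].
    - apply Rle_trans with (M4 b * t ^ 2 * w); [|right; ring].
      apply Rmult_le_compat; try lra.
      + apply Rmult_le_pos; [lra|apply pow_le; lra].
      + apply Rmult_le_compat_l; lra. }
  assert (EE : Ec b * t ^ 2 = M4 b * w * t ^ 2 + t ^ 2 * (K4 b / 8)) by (unfold Ec, w; field; lra).
  assert (HK0 : 0 <= K4 b / 8).
  { unfold K4. assert (0 <= sqrt b < 1) by (apply sqrt_lt1; lra).
    assert (0 < M4 (sqrt b)) by (apply M4_pos; lra).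
    unfold Rdiv. apply Rmult_le_pos; [|lra]. apply Rmult_le_pos; [lra|].
    left; apply Rinv_0_lt_compat; lra. }
  assert (0 <= t ^ 2 * (K4 b / 8)) by (apply Rmult_le_pos; lra).
  rewrite EE. split; lra.
Qed.

Lemma Gs_mono n x y : 0 <= x <= y -> Gs n x <= Gs n y.
Proof.
  intros H. unfold Gs. apply ssum_le. intros j Hj.
  destruct (kprod_bounds (S n) j ltac:(lia) ltac:(lia)) as [H0 _].
  apply Rmult_le_compat_l; [lra|]. apply pow_incr; lra.
Qed.

Lemma lhs_Gs n k : 0 < k -> kappa_lhs (S n) k = Gs n (/ k).
Proof.
  intros Hk. unfold kappa_lhs, Gs. replace (S n - 1)%nat with n by lia.
  apply ksum_ssum. lra.
Qed.

Lemma core (l : R) (kappa : nat -> R) : 0 < l < 1 ->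
  (forall z : nat, (2 <= z)%nat -> 0 < kappa z /\ kappa_lhs z (kappa z) = l / (1 - l)) ->
  exists C t0, 0 < t0 /\ 0 <= C /\ forall z : nat, (2 <= z)%nat -> / INR z <= t0 ->
    Rabs (kappa z - (/ l - / (l * (1 - l)) * / INR z)) <= C * (/ INR z) ^ 2.
Proof.
  intros Hl Hk.
  set (c := l / (1 - l)). set (b := (1 + l) / 2).
  assert (Hb : l < b < 1) by (unfold b; lra).
  set (E := Ec b). set (Bb := / (1 - b) ^ 3).
  assert (HBb : 0 < Bb) by (unfold Bb; apply Rinv_0_lt_compat, pow_lt; lra).
  assert (HE : 0 <= E).
  { unfold E, Ec. assert (0 <= sqrt b < 1) by (apply sqrt_lt1; lra).
    assert (0 < M4 (sqrt b)) by (apply M4_pos; lra).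
    assert (0 < M4 b) by (apply M4_pos; lra). unfold K4.
    assert (0 < / (1 - b) ^ 3) by (apply Rinv_0_lt_compat, pow_lt; lra).
    assert (0 < / (1 - sqrt b)) by (apply Rinv_0_lt_compat; lra).
    unfold Rdiv. nra. }
  set (D := Bb + E).
  set (gap := b / (1 - b) - c).
  assert (Hgap : 0 < gap).
  { unfold gap, c. assert (b / (1 - b) - l / (1 - l) = (b - l) / ((1 - b) * (1 - l))) by (field; lra).
    rewrite H. apply Rdiv_lt_0_compat; nra. }
  set (C := 2 * D / (l * (1 - l) * (1 - b) ^ 2) + 2 * E / l ^ 2).
  set (t0 := Rmin (gap / (2 * D)) (l / (2 * D))).
  assert (HD : 0 < D) by (unfold D; lra).
  exists C, t0. split; [|split].
  { unfold t0. apply Rmin_pos; apply Rdiv_lt_0_compat; lra. }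
  { unfold C. assert (0 < (1 - b) ^ 2) by (apply pow_lt; lra).
    assert (0 < l ^ 2) by (apply pow_lt; lra).
    assert (0 < l * (1 - l) * (1 - b) ^ 2) by (apply Rmult_lt_0_compat; nra).
    assert (0 <= 2 * D / (l * (1 - l) * (1 - b) ^ 2)) by (apply Rlt_le, Rdiv_lt_0_compat; lra).
    assert (0 <= 2 * E / l ^ 2) by (unfold Rdiv; apply Rmult_le_pos; [lra|apply Rlt_le, Rinv_0_lt_compat; lra]).
    lra. }
  intros z Hz Ht.
  destruct z as [|n]; [lia|].
  assert (Hn : (1 <= n)%nat) by lia.
  set (t := / INR (S n)) in *.
  assert (HZ : 2 <= INR (S n)) by (apply (le_INR 2); lia).
  assert (Htp : 0 < t) by (unfold t; apply Rinv_0_lt_compat; lra).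
  assert (Ht1 : t <= 1 / 2).
  { unfold t. rewrite <- (Rinv_inv 2). unfold Rdiv; rewrite Rmult_1_l. apply Rinv_le_contravar; lra. }
  assert (Htg : t <= gap / (2 * D)) by (apply Rle_trans with t0; [lra|apply Rmin_l]).
  assert (Htl : t <= l / (2 * D)) by (apply Rle_trans with t0; [lra|apply Rmin_r]).
  assert (HtD1 : D * t <= gap / 2).
  { apply Rmult_le_compat_l with (r := D) in Htg; [|lra].
    replace (D * (gap / (2 * D))) with (gap / 2) in Htg by (field; lra). exact Htg. }
  assert (HtD2 : D * t <= l / 2).
  { apply Rmult_le_compat_l with (r := D) in Htl; [|lra].
    replace (D * (l / (2 * D))) with (l / 2) in Htl by (field; lra). exact Htl. }
  assert (Ht2 : t ^ 2 <= t) by (replace (t ^ 2) with (t * t) by ring; nra).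
  destruct (Hk (S n) Hz) as [Hkp Heq].
  rewrite lhs_Gs in Heq by exact Hkp. fold c in Heq.
  set (x := / kappa (S n)) in *.
  assert (Hx0 : 0 < x) by (unfold x; apply Rinv_0_lt_compat; lra).
  assert (Hxb : x <= b).
  { destruct (Rle_or_lt x b) as [H|H]; [exact H|exfalso].
    assert (HG := Gs_mono n b x ltac:(lra)).
    destruct (G_err n b b Hn ltac:(lra) ltac:(lra)) as [Hlo _]. fold t E in Hlo.
    assert (HBb' : b / (1 - b) ^ 3 <= Bb).
    { unfold Bb, Rdiv. assert (0 < / (1 - b) ^ 3) by (apply Rinv_0_lt_compat, pow_lt; lra). nra. }
    assert (t * (b / (1 - b) ^ 3) + E * t ^ 2 <= D * t).
    { unfold D. assert (0 <= b / (1 - b) ^ 3) by (apply Rlt_le, Rdiv_lt_0_compat; [lra|apply pow_lt; lra]).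
      nra. }
    assert (gap = b / (1 - b) - c) by reflexivity. fold c in Heq. lra. }
  destruct (G_err n x b Hn ltac:(lra) ltac:(lra)) as [Hlo Hhi]. fold t E in Hlo, Hhi.
  rewrite Heq in Hlo, Hhi.
  set (e := (x / (1 - x) - c) - t * (x / (1 - x) ^ 3)).
  assert (He : - (E * t ^ 2) <= e <= E * t ^ 2) by (unfold e; lra).
  set (d := x - l).
  assert (Hd : d = (1 - l) * t * (x / (1 - x) ^ 2) + (1 - x) * (1 - l) * e).
  { unfold d, e, c. field. split; lra. }
  assert (Hq : 0 <= x / (1 - x) ^ 2 <= Bb).
  { assert (x / (1 - x) ^ 2 = x * (1 - x) * / (1 - x) ^ 3) by (field; lra).
    assert (0 < / (1 - x) ^ 3) by (apply Rinv_0_lt_compat, pow_lt; lra).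
    assert (/ (1 - x) ^ 3 <= Bb) by (unfold Bb; apply Rinv_le_contravar; [apply pow_lt; lra|apply pow_incr; lra]).
    assert (0 <= x * (1 - x) <= 1) by (split; nra). rewrite H. split; nra. }
  assert (Hd2 : - (D * t) <= d <= D * t).
  { rewrite Hd. unfold D.
    assert (0 <= (1 - x) * (1 - l) <= 1) by (split; nra).
    assert (0 <= (1 - l) * t * (x / (1 - x) ^ 2) <= t * Bb).
    { assert (0 <= (1 - l) * t <= t) by (split; nra). split; [apply Rmult_le_pos; lra|]. apply Rmult_le_compat; lra. }
    assert (- (E * t ^ 2) <= (1 - x) * (1 - l) * e <= E * t ^ 2) by (split; nra).
    split; nra. }
  assert (Hxl : l / 2 <= x) by (unfold d in Hd2; lra).
  assert (Hkx : kappa (S n) = / x) by (unfold x; rewrite Rinv_inv; reflexivity).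
  rewrite Hkx.
  set (W := / (l * (1 - l) * (1 - x) ^ 2)).
  set (Wb := / (l * (1 - l) * (1 - b) ^ 2)).
  assert (HR : / x - (/ l - / (l * (1 - l)) * t)
     = - (t * d) * (2 - x - l) * W - (1 - x) * (1 - l) * e * / (l * x)).
  { unfold W, d, e, c. field. repeat split; lra. }
  rewrite HR.
  assert (HW : 0 < W <= Wb).
  { unfold W, Wb. assert (0 < l * (1 - l)) by nra.
    split. apply Rinv_0_lt_compat. apply Rmult_lt_0_compat; [lra|apply pow_lt; lra].
    apply Rinv_le_contravar. apply Rmult_lt_0_compat; [lra|apply pow_lt; lra].
    apply Rmult_le_compat_l; [lra|apply pow_incr; lra]. }
  assert (HP1 : Rabs (- (t * d) * (2 - x - l) * W) <= 2 * D * Wb * t ^ 2).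
  { rewrite Rabs_mult, Rabs_mult, Rabs_Ropp, Rabs_mult.
    rewrite (Rabs_pos_eq t), (Rabs_pos_eq (2 - x - l)), (Rabs_pos_eq W) by lra.
    assert (Rabs d <= D * t) by (apply Rabs_le; lra).
    assert (0 <= Rabs d) by apply Rabs_pos.
    assert (t * Rabs d <= D * t ^ 2) by (simpl; nra).
    assert (0 <= t * Rabs d) by nra.
    assert (0 <= (2 - x - l) * W <= 2 * Wb) by (split; nra).
    assert (t * Rabs d * ((2 - x - l) * W) <= D * t ^ 2 * (2 * Wb)).
    { apply Rmult_le_compat; lra. }
    nra. }
  assert (HP2 : Rabs ((1 - x) * (1 - l) * e * / (l * x)) <= 2 * E / l ^ 2 * t ^ 2).
  { rewrite Rabs_mult, Rabs_mult, Rabs_mult.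
    rewrite (Rabs_pos_eq (1 - x)), (Rabs_pos_eq (1 - l)), (Rabs_pos_eq (/ (l * x))) by
      (try lra; apply Rlt_le, Rinv_0_lt_compat; nra).
    assert (Rabs e <= E * t ^ 2) by (apply Rabs_le; lra).
    assert (0 <= Rabs e) by apply Rabs_pos.
    assert (Hi : / (l * x) <= 2 / l ^ 2).
    { replace (2 / l ^ 2) with (/ (l * (l / 2))) by (field; lra).
      apply Rinv_le_contravar; [apply Rmult_lt_0_compat; lra|]. apply Rmult_le_compat_l; lra. }
    assert (0 < / (l * x)) by (apply Rinv_0_lt_compat; nra).
    assert (0 <= (1 - x) * (1 - l) <= 1) by (split; nra).
    assert ((1 - x) * (1 - l) * Rabs e <= E * t ^ 2) by nra.
    assert (0 <= (1 - x) * (1 - l) * Rabs e) by nra.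
    apply Rle_trans with (E * t ^ 2 * (2 / l ^ 2)).
    - apply Rmult_le_compat; lra.
    - right; field; lra. }
  unfold Rminus at 1.
  eapply Rle_trans; [apply Rabs_triang|]. rewrite Rabs_Ropp.
  unfold C. fold Wb.
  assert (2 * D / (l * (1 - l) * (1 - b) ^ 2) = 2 * D * Wb) by (unfold Wb; field; split; [|split]; try lra; apply pow_nonzero; lra).
  rewrite H. nra.
Qed.

Theorem mainTheorem13 (q : R) (kappa : nat -> R) :
  0 < q -> q < 1/2 ->
  (forall z : nat, (2 <= z)%nat ->
     0 < kappa z /\
     kappa_lhs z (kappa z) = (q / (1 - q)) / (1 - q / (1 - q))) ->
  forall eps : R, 0 < eps ->
    exists N : nat, forall z : nat, (N <= z)%nat ->
      Rabs (kappa z - ((1 - q) / q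
              - (1 - q) ^ 2 / (q * ((1 - q) - q)) * (1 / INR z)))
        <= eps * (1 / INR z).
Proof.
  intros Hq0 Hq1 Hk eps Heps.
  set (l := q / (1 - q)) in *.
  assert (Hl : 0 < l < 1).
  { unfold l. split. apply Rdiv_lt_0_compat; lra.
    apply Rmult_lt_reg_r with (1 - q); [lra|]. unfold Rdiv. rewrite Rmult_assoc, Rinv_l by lra. lra. }
  destruct (core l kappa Hl Hk) as [C [t0 [Ht0 [HC Hmain]]]].
  set (m := Rmin t0 (eps / (C + 1))).
  assert (Hm : 0 < m) by (unfold m; apply Rmin_pos; [lra|apply Rdiv_lt_0_compat; lra]).
  destruct (INR_archimed m 1 Hm) as [N HN].
  exists (Nat.max N 2). intros z Hz.
  assert (Hz2 : (2 <= z)%nat) by lia.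
  assert (HzN : INR N <= INR z) by (apply le_INR; lia).
  assert (HZ : 2 <= INR z) by (apply (le_INR 2); lia).
  set (t := / INR z).
  assert (Htp : 0 < t) by (unfold t; apply Rinv_0_lt_compat; lra).
  assert (Htm : t < m).
  { assert (INR z * m > 1) by nra.
    unfold t. apply Rmult_lt_reg_l with (INR z); [lra|]. rewrite Rinv_r by lra. lra. }
  assert (Ht0' : t <= t0) by (apply Rle_trans with m; [lra|apply Rmin_l]).
  assert (Hte : t <= eps / (C + 1)) by (apply Rle_trans with m; [lra|apply Rmin_r]).
  assert (HCt : C * t <= eps).
  { apply Rmult_le_compat_l with (r := C + 1) in Hte; [|lra].
    replace ((C + 1) * (eps / (C + 1))) with eps in Hte by (field; lra). nra. }
  specialize (Hmain z Hz2 Ht0'). fold t in Hmain.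
  replace ((1 - q) / q - (1 - q) ^ 2 / (q * ((1 - q) - q)) * (1 / INR z))
    with (/ l - / (l * (1 - l)) * t).
  2:{ unfold l, t. field. repeat split; lra. }
  replace (1 / INR z) with t by (unfold t; field; lra).
  eapply Rle_trans; [exact Hmain|].
  replace (C * t ^ 2) with ((C * t) * t) by ring.
  apply Rmult_le_compat_r; lra.
Qed.
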